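(* Let $G$ be a simple graph on $n$ vertices with $cM_2(G)\ge cM_2(H)$ for every simple graph $H$ on $n$ vertices, and let $F$, $X$, $Y$, $N^+_F$ be as defined in the context. If $u,v\in X$ and $d_G(u)\ge d_G(v)$, then $N^+_F(u)\cap Y\supseteq N^+_F(v)\cap Y$.
   Context: All graphs are finite and simple; $d_G(u)$ is the degree of $u$ and $cM_2(G)=\sum_{uv\in E(G)}|d_G(u)^2-d_G(v)^2|$. The canonical mixed graph $F$ of $G$ has vertex set $V(G)$; for each edge $uv\in E(G)$: if $d_G(u)>d_G(v)$ then $F$ contains the arc $\overrightarrow{uv}$, and if $d_G(u)=d_G(v)$ then $F$ contains the undirected edge $uv$. $d^+_F(u)$ (resp. $d^-_F(u)$) is the number of arcs of $F$ with tail (resp. head) $u$; $N^+_F(u)=\{w:\overrightarrow{uw}\in A(F)\}$. $X=\{u\in V(G): d^+_F(u)\ge d^-_F(u)\}$ and $Y=\{u\in V(G): d^+_F(u)< d^-_F(u)\}$. *)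

(* Defs.v *)
From mathcomp Require Import all_boot all_order.
Set Implicit Arguments. Unset Strict Implicit. Unset Printing Implicit Defensive.

Definition simple_graph (n : nat) (e : rel 'I_n) : Prop :=
  symmetric e /\ irreflexive e.

Definition deg n (e : rel 'I_n) (u : 'I_n) : nat := #|[set w | e u w]|.

Definition absdiff (a b : nat) : nat := (a - b) + (b - a).

Definition cM2 n (e : rel 'I_n) : nat :=
  \sum_(u : 'I_n) \sum_(v : 'I_n | (u < v) && e u v)
     absdiff (deg e u ^ 2) (deg e v ^ 2).

(* arcs of the canonical mixed graph F: arc u -> w iff uw edge and d(u) > d(w) *)
Definition arcF n (e : rel 'I_n) (u w : 'I_n) : bool := e u w && (deg e w < deg e u).

Definition outdegF n (e : rel 'I_n) (u : 'I_n) : nat := #|[set w | arcF e u w]|.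
Definition indegF n (e : rel 'I_n) (u : 'I_n) : nat := #|[set w | arcF e w u]|.

Definition Nplus n (e : rel 'I_n) (u : 'I_n) : {set 'I_n} := [set w | arcF e u w].

Definition Xset n (e : rel 'I_n) : {set 'I_n} := [set u | indegF e u <= outdegF e u].
Definition Yset n (e : rel 'I_n) : {set 'I_n} := [set u | outdegF e u < indegF e u].

(* Main.v *)
Require Import Defs.
From mathcomp Require Import all_boot all_order all_algebra zify ring lra.
Import Order.TTheory GRing.Theory Num.Theory.
Set Implicit Arguments. Unset Strict Implicit. Unset Printing Implicit Defensive.
Local Open Scope ring_scope.

Definition F (p q : int) : int := `|p ^+ 2 - q ^+ 2|.
Definition Dg n (e : rel 'I_n) (x : 'I_n) : int := (deg e x)%:Z.
Definition ed n (e : rel 'I_n) x y : int := if e x y then F (Dg e x) (Dg e y) else 0.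
Definition Q n (e : rel 'I_n) : int := \sum_x \sum_y ed e x y.

Lemma absdiffE (a b : nat) : (absdiff a b)%:Z = `|a%:Z - b%:Z|.
Proof. rewrite /absdiff; case: (leqP a b) => h. 
- have -> : (a - b = 0)%N by apply/eqP; rewrite subn_eq0. lia.
- have -> : (b - a = 0)%N by apply/eqP; rewrite subn_eq0 ltnW. lia.
Qed.

Lemma PoszS (I : Type) (r : seq I) (P : pred I) (f : I -> nat) :
  Posz (\sum_(i <- r | P i) f i)%N = \sum_(i <- r | P i) Posz (f i).
Proof. exact: (big_morph Posz PoszD (erefl _)). Qed.

Lemma FC p q : F p q = F q p.
Proof. rewrite /F; lia. Qed.

Lemma edC n (e : rel 'I_n) : simple_graph e -> forall x y, ed e x y = ed e y x.
Proof. move=> [sy _] x y; by rewrite /ed sy FC. Qed.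

Lemma ed_diag n (e : rel 'I_n) : simple_graph e -> forall x, ed e x x = 0.
Proof. move=> [_ ir] x; by rewrite /ed ir. Qed.

Lemma Q_cM2 n (e : rel 'I_n) : simple_graph e -> Q e = 2 * (cM2 e)%:Z.
Proof.
move=> sg.
have split_xy : forall x, \sum_(y : 'I_n) ed e x y = \sum_(y : 'I_n | (x < y)%N) ed e x y + \sum_(y : 'I_n | (y < x)%N) ed e x y.
  move=> x. rewrite (bigID (fun y : 'I_n => (x < y)%N)) /=; congr (_ + _).
  rewrite (bigID (fun y : 'I_n => (y < x)%N)) /= [X in _ + X]big1 ?addr0.
    by apply: eq_bigl => y; case: ltngtP.
  move=> y /andP[h1 h2]; have -> : y = x by apply/val_inj/eqP; rewrite eqn_leq leqNgt h1 leqNgt h2.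
  exact: ed_diag.
rewrite /Q (eq_bigr _ (fun x _ => split_xy x)) big_split /=.
have -> : \sum_(x : 'I_n) \sum_(y : 'I_n | (y < x)%N) ed e x y = \sum_(x : 'I_n) \sum_(y : 'I_n | (x < y)%N) ed e x y.
  rewrite (exchange_big_dep xpredT) //=; apply: eq_bigr => x _; apply: eq_bigr => y _; exact: edC.
suff H : \sum_(x : 'I_n) \sum_(y : 'I_n | (x < y)%N) ed e x y = (cM2 e)%:Z by rewrite H; lia.
rewrite /cM2 PoszS; apply: eq_bigr => x _; rewrite PoszS.
rewrite [RHS]big_mkcond [LHS]big_mkcond /=; apply: eq_bigr => y _.
rewrite /ed; case: (x < y)%N; case: (e x y) => //=.
by rewrite absdiffE /F /Dg !PoszM.
Qed.

Definition Dd n (h e : rel 'I_n) x y := ed h x y - ed e x y.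

Lemma sumI n (u v : 'I_n) (G : 'I_n -> int) : u != v ->
  \sum_x (((x == u)%:R + (x == v)%:R) * G x) = G u + G v.
Proof.
move=> uv; rewrite (eq_bigr (fun x => (x == u)%:R * G x + (x == v)%:R * G x)); last by move=> x _; rewrite mulrDl.
rewrite big_split /=.
have H : forall w : 'I_n, \sum_x ((x == w)%:R * G x) = G w.
  move=> w; rewrite (bigD1 w) //= eqxx mul1r big1 ?addr0 //.
  by move=> x /negbTE ->; rewrite mul0r.
by rewrite !H.
Qed.

Lemma delta n (e h : rel 'I_n) u v : simple_graph e -> simple_graph h -> u != v ->
 (forall x y, x != u -> x != v -> y != u -> y != v -> h x y = e x y) ->
 (forall x, x != u -> x != v -> deg h x = deg e x) ->
 (cM2 h)%:Z - (cM2 e)%:Z = \sum_y Dd h e u y + \sum_y Dd h e v y - Dd h e u v.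
Proof.
move=> se sh uv hE dE.
set I := fun x : 'I_n => ((x == u)%:R + (x == v)%:R : int).
have DC : forall x y, Dd h e x y = Dd h e y x by move=> x y; rewrite /Dd (edC se) (edC sh).
have D0 : forall x, Dd h e x x = 0 by move=> x; rewrite /Dd !ed_diag.
have key : forall x y, Dd h e x y = I x * Dd h e x y + I y * Dd h e x y - I x * I y * Dd h e x y.
  move=> x y; rewrite /I.
  have uvF : (u == v) = false by apply/negbTE.
  have vuF : (v == u) = false by rewrite eq_sym.
  case: (eqVneq x u) => [->|xu]; last case: (eqVneq x v) => [->|xv];
  case: (eqVneq y u) => [->|yu]; try case: (eqVneq y v) => [->|yv];
  rewrite ?eqxx ?uvF ?vuF ?(negbTE xu) ?(negbTE xv) ?(negbTE yu) ?(negbTE yv) /=; try ring.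
  rewrite /Dd /ed hE // /Dg !dE //; ring.
have : 2 * ((cM2 h)%:Z - (cM2 e)%:Z) = \sum_x \sum_y Dd h e x y.
  rewrite mulrBr -!Q_cM2 // /Q -sumrB; apply: eq_bigr => x _; rewrite -sumrB //.
rewrite (eq_bigr (fun x => \sum_y (I x * Dd h e x y + I y * Dd h e x y - I x * I y * Dd h e x y)));
  last by move=> x _; apply: eq_bigr => y _; exact: key.
have E1 : \sum_x \sum_y (I x * Dd h e x y) = \sum_y Dd h e u y + \sum_y Dd h e v y.
  rewrite -(@sumI _ u v (fun x => \sum_y Dd h e x y) uv); apply: eq_bigr => x _; by rewrite mulr_sumr.
have E2 : \sum_x \sum_y (I y * Dd h e x y) = \sum_y Dd h e u y + \sum_y Dd h e v y.
  rewrite exchange_big /= -(@sumI _ u v (fun x => \sum_y Dd h e x y) uv); apply: eq_bigr => y _; rewrite mulr_sumr.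
  by apply: eq_bigr => x _; rewrite DC.
have E3 : \sum_x \sum_y (I x * I y * Dd h e x y) = 2 * Dd h e u v.
  rewrite (eq_bigr (fun x => I x * (Dd h e x u + Dd h e x v))).
    by rewrite (@sumI _ u v (fun x => Dd h e x u + Dd h e x v) uv) !D0 (DC v u); ring.
  move=> x _; rewrite -(@sumI _ u v (fun y => Dd h e x y) uv) mulr_sumr; apply: eq_bigr => y _; rewrite /I; ring.
rewrite (eq_bigr (fun x => \sum_y (I x * Dd h e x y) + \sum_y (I y * Dd h e x y) - \sum_y (I x * I y * Dd h e x y))); last first.
  by move=> x _; rewrite -big_split -sumrB.
rewrite sumrB big_split /= E1 E2 E3 => H.
have q1 : \sum_(y < n) Dd h e u y = \sum_y Dd h e u y := erefl.
have q2 : \sum_(y < n) Dd h e v y = \sum_y Dd h e v y := erefl.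
rewrite q1 q2; lia.
Qed.

Definition flip n (e : rel 'I_n) (a b : 'I_n) : rel 'I_n :=
  fun x y => if ((x == a) && (y == b)) || ((x == b) && (y == a)) then ~~ e x y else e x y.

Lemma flip_simple n (e : rel 'I_n) a b : a != b -> simple_graph e -> simple_graph (flip e a b).
Proof.
move=> ab [sy ir]; split.
- move=> x y; rewrite /flip (sy x y); by case: (x == a); case: (x == b); case: (y == a); case: (y == b).
- move=> x; rewrite /flip ir; case: (eqVneq x a) => [xa|xa].
  + subst x; by rewrite (negbTE ab).
  + by rewrite andbF.
Qed.

Lemma flip_same n (e : rel 'I_n) a b x y :
  ~~ (((x == a) && (y == b)) || ((x == b) && (y == a))) -> flip e a b x y = e x y.
Proof. by rewrite /flip => /negbTE ->. Qed.

Lemma flipC n (e : rel 'I_n) a b x y : flip e a b x y = flip e b a x y.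
Proof. by rewrite /flip orbC. Qed.

Lemma deg_flip_other n (e : rel 'I_n) a b x : x != a -> x != b -> deg (flip e a b) x = deg e x.
Proof.
move=> xa xb; rewrite /deg; apply: eq_card => y; rewrite !inE flip_same //.
by rewrite (negbTE xa) (negbTE xb).
Qed.

Lemma Dg_flip_a n (e : rel 'I_n) a b : a != b ->
  Dg (flip e a b) a = Dg e a + (if e a b then -1 else 1).
Proof.
move=> ab; rewrite /Dg /deg.
have ba : (a == b) = false by apply/negbTE.
case E: (e a b).
- have -> : [set y | flip e a b a y] = [set y | e a y] :\ b.
    apply/setP => y; rewrite !inE /flip eqxx ba /= ?andbF ?orbF.
    by case: (eqVneq y b) => [->|] //=; rewrite E.
  rewrite [in RHS](cardsD1 b) !inE E /=; lia.
- have -> : [set y | flip e a b a y] = b |: [set y | e a y].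
    apply/setP => y; rewrite !inE /flip eqxx ba /= ?andbF ?orbF.
    by case: (eqVneq y b) => [->|] //=; rewrite E.
  rewrite cardsU1 !inE E /=; lia.
Qed.

Lemma Dg_flip_b n (e : rel 'I_n) a b : simple_graph e -> a != b ->
  Dg (flip e a b) b = Dg e b + (if e a b then -1 else 1).
Proof.
move=> [sy _] ab.
have -> : Dg (flip e a b) b = Dg (flip e b a) b.
  by rewrite /Dg /deg; congr (Posz _); apply: eq_card => y; rewrite !inE flipC.
by rewrite Dg_flip_a 1?eq_sym // sy.
Qed.

Lemma Fpos (x y : int) : 0 <= x - y -> 0 <= x + y -> F x y = x^+2 - y^+2.
Proof. move=> h1 h2; rewrite /F ger0_norm //.
have : 0 <= (x - y) * (x + y) by apply: mulr_ge0. 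
have -> : (x - y) * (x + y) = x^+2 - y^+2 by ring. done. Qed.
Lemma Fneg (x y : int) : 0 <= y - x -> 0 <= x + y -> F x y = y^+2 - x^+2.
Proof. move=> h1 h2; rewrite /F ler0_norm; first ring.
have : 0 <= (y - x) * (x + y) by apply: mulr_ge0.
have -> : (y - x) * (x + y) = y^+2 - x^+2 by ring. rewrite subr_ge0 -subr_le0. done. Qed.
Arguments Fpos : clear implicits.
Arguments Fneg : clear implicits.
Lemma Fge (x y : int) : x^+2 - y^+2 <= F x y.
Proof. exact: ler_norm. Qed.
Lemma mainnum (a b c z : int) : 0 <= c -> c < b -> b <= a -> 0 <= z ->
  0 < (F (a+1) (b-1) + F (a-1) (b+1) - 2 * F a b) + (F (a+1) z - 2 * F a z + F (b+1) z)
      + (F (a+1) c + F (b+1) c - 2 * F b c) + 8 - 2*a - 2*b.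
Proof. move=> hc hb ha hz.
rewrite (Fpos (a+1) (b-1)); try lia.
rewrite (Fpos a b); try lia.
rewrite (Fpos (a+1) c); try lia.
rewrite (Fpos (b+1) c); try lia.
rewrite (Fpos b c); try lia.
have e6 := Fge (a-1) (b+1).
case: (lerP z a) => hza.
- rewrite (Fpos a z); try lia.
  rewrite (Fpos (a+1) z); try lia.
  have f3 := Fge (b+1) z.
  lia.
- rewrite (Fneg a z); try lia.
  rewrite (Fneg (a+1) z); try lia.
  rewrite (Fneg (b+1) z); try lia.
  case: (lerP a b) => hab.
  + have hab' : a = b by lia.
    subst a.
    rewrite (Fneg (b-1) (b+1)); try lia.
  + have : 0 <= (a + b) * (a - b - 1) by apply: mulr_ge0; lia.
    lia.
Qed.

Lemma Fge' (x y : int) : y^+2 - x^+2 <= F x y.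
Proof. by rewrite /F -normrN opprB ler_norm. Qed.

Lemma sd_ge (a t : int) : 0 <= a -> 0 <= t -> 0 <= F (a+1) t + F (a-1) t - 2 * F a t + 2.
Proof.
move=> ha ht; case: (lerP t a) => h.
- rewrite (Fpos a t); [|lia|lia]. have := Fge (a+1) t. have := Fge (a-1) t. lia.
- rewrite (Fneg a t); [|lia|lia]. have := Fge' (a+1) t. have := Fge' (a-1) t. lia.
Qed.

Lemma fd_ge (a t : int) : 0 <= a -> 0 <= t ->
  (if t < a then 2*a+1 else 0) - (if a < t then 2*a+1 else 0) <= F (a+1) t - F a t.
Proof.
move=> ha ht; case: (lerP t a) => h.
- rewrite (Fpos a t); [|lia|lia]. have := Fge (a+1) t.
  case: ltrP => h1; case: ltrP => h2; lia.
- rewrite (Fneg a t); [|lia|lia]. have := Fge' (a+1) t.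
  case: ltrP => h1; case: ltrP => h2; lia.
Qed.

Lemma sum_ge3 n (G : 'I_n -> int) p q r : p != q -> p != r -> q != r ->
  (forall y, y != p -> y != q -> y != r -> 0 <= G y) -> G p + G q + G r <= \sum_y G y.
Proof.
move=> pq pr qr H.
rewrite (bigD1 p) //= (bigD1 q) 1?eq_sym //= (bigD1 r) /=; last by rewrite eq_sym pr eq_sym qr.
rewrite !addrA lerDl; apply: sumr_ge0 => y /andP[/andP[yp yq] yr]; exact: H.
Qed.

Lemma sum_ind n (e : rel 'I_n) x : \sum_y (if e x y then 1 else 0 : int) = Dg e x.
Proof.
rewrite /Dg /deg -sum1dep_card PoszS [RHS]big_mkcond /=; apply: eq_bigr => y _.
by case: (e x y).
Qed.

Lemma Dg_ge0 n (e : rel 'I_n) x : 0 <= Dg e x.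
Proof. by rewrite /Dg. Qed.

Ltac clia := repeat match goal with
  | H : is_true (~~ (_ == _)) |- _ => clear H
  | H : (_ == _) = false |- _ => clear H
  | H : prod _ _ |- _ => clear H
  | H : forall _, _ |- _ => clear H
  end; lia.

Lemma core n (e : rel 'I_n) u v w z : simple_graph e ->
  u != v -> u != w -> u != z -> v != w -> v != z -> w != z ->
  e u v -> e v w -> e u z -> ~~ e u w -> ~~ e v z ->
  (deg e v <= deg e u)%N -> (deg e w < deg e v)%N ->
  2 * (cM2 e)%:Z < (cM2 (flip (flip e v w) u w))%:Z + (cM2 (flip (flip e u z) v z))%:Z.
Proof.
move=> se uv uw uz vw vz wz euv evw euz euw evz dvu dwv.
have [sy ir] := se.
have vu : v != u by rewrite eq_sym. have wu : w != u by rewrite eq_sym.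
have zu : z != u by rewrite eq_sym. have wv : w != v by rewrite eq_sym.
have zv : z != v by rewrite eq_sym. have zw : z != w by rewrite eq_sym.
have NE := (negbTE uv, negbTE uw, negbTE uz, negbTE vw, negbTE vz, negbTE wz,
            negbTE vu, negbTE wu, negbTE zu, negbTE wv, negbTE zv, negbTE zw).
set e1 := flip e v w. set h1 := flip e1 u w.
set e2 := flip e u z. set h2 := flip e2 v z.
have se1 : simple_graph e1 by apply: flip_simple.
have sh1 : simple_graph h1 by apply: flip_simple.
have se2 : simple_graph e2 by apply: flip_simple.
have sh2 : simple_graph h2 by apply: flip_simple.
move Ea: (Dg e u) => a. move Eb: (Dg e v) => b. move Ec: (Dg e w) => c. move Ez: (Dg e z) => zeta.
have a0 : 0 <= a by rewrite -Ea Dg_ge0.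
have b0 : 0 <= b by rewrite -Eb Dg_ge0.
have c0 : 0 <= c by rewrite -Ec Dg_ge0.
have z0 : 0 <= zeta by rewrite -Ez Dg_ge0.
have e1uw : e1 u w = e u w by rewrite /e1 /flip !NE.
have e2vz : e2 v z = e v z by rewrite /e2 /flip !NE.
have d1u : Dg h1 u = a + 1.
  by rewrite -?Ea -?Eb -?Ec -?Ez /h1 Dg_flip_a // e1uw (negbTE euw) /e1 /Dg deg_flip_other.
have d1v : Dg h1 v = b - 1.
  by rewrite -?Ea -?Eb -?Ec -?Ez /h1 /Dg deg_flip_other // -/(Dg e1 v) /e1 Dg_flip_a // evw.
have d1w : Dg h1 w = c.
  rewrite -?Ea -?Eb -?Ec -?Ez /h1 Dg_flip_b // e1uw (negbTE euw) /e1 Dg_flip_b // evw; ring.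
have d1o : forall y, y != u -> y != v -> y != w -> Dg h1 y = Dg e y.
  by move=> y yu yv yw; rewrite /h1 /Dg !deg_flip_other.
have d2u : Dg h2 u = a - 1.
  by rewrite -?Ea -?Eb -?Ec -?Ez /h2 /Dg deg_flip_other // -/(Dg e2 u) /e2 Dg_flip_a // euz.
have d2v : Dg h2 v = b + 1.
  by rewrite -?Ea -?Eb -?Ec -?Ez /h2 Dg_flip_a // e2vz (negbTE evz) /e2 /Dg deg_flip_other.
have d2z : Dg h2 z = zeta.
  rewrite -?Ea -?Eb -?Ec -?Ez /h2 Dg_flip_b // e2vz (negbTE evz) /e2 Dg_flip_b // euz; ring.
have d2o : forall y, y != u -> y != v -> y != z -> Dg h2 y = Dg e y.
  by move=> y yu yv yz; rewrite /h2 /Dg !deg_flip_other.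
have h1u : forall y, h1 u y = (y == w) || e u y.
  move=> y; case: (eqVneq y w) => [->|yw]; first by rewrite /h1 /flip !eqxx /= e1uw euw.
  rewrite /h1 flip_same ?eqxx ?(negbTE yw) ?NE // /e1 flip_same // !NE //.
have h1v : forall y, h1 v y = (y != w) && e v y.
  move=> y; rewrite /h1 flip_same ?NE ?andbF //.
  case: (eqVneq y w) => [->|yw]; first by rewrite /e1 /flip !eqxx /= evw.
  by rewrite /e1 flip_same // eqxx (negbTE yw) NE.
have h2u : forall y, h2 u y = (y != z) && e u y.
  move=> y; rewrite /h2 flip_same ?NE ?andbF //.
  case: (eqVneq y z) => [->|yz]; first by rewrite /e2 /flip !eqxx /= euz.
  by rewrite /e2 flip_same // eqxx (negbTE yz) NE.
have h2v : forall y, h2 v y = (y == z) || e v y.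
  move=> y; case: (eqVneq y z) => [->|yz]; first by rewrite /h2 /flip !eqxx /= e2vz (negbTE evz).
  rewrite /h2 flip_same ?eqxx ?(negbTE yz) ?NE // /e2 flip_same // !NE //.
have rowU : (F (a+1) (b-1) - F a b + (F (a-1) (b+1) - F a b) + 2) + F (a+1) c
    + (F (a+1) zeta - 2 * F a zeta + 2) - 2 * a
    <= \sum_y Dd h1 e u y + \sum_y Dd h2 e u y.
  have SG : \sum_y (Dd h1 e u y + Dd h2 e u y + 2 * (if e u y then 1 else 0))
      = \sum_y Dd h1 e u y + \sum_y Dd h2 e u y + 2 * a by rewrite !big_split /= -mulr_sumr sum_ind Ea.
  have Gv : Dd h1 e u v + Dd h2 e u v + 2 * (if e u v then 1 else 0)
      = F (a+1) (b-1) - F a b + (F (a-1) (b+1) - F a b) + 2.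
    by rewrite /Dd /ed h1u h2u !NE euv /= d1u d1v d2u d2v ?Ea ?Eb; clia.
  have Gw : Dd h1 e u w + Dd h2 e u w + 2 * (if e u w then 1 else 0) = F (a+1) c.
    by rewrite /Dd /ed h1u h2u eqxx !NE (negbTE euw) /= d1u d1w ?Ea; clia.
  have Gz : Dd h1 e u z + Dd h2 e u z + 2 * (if e u z then 1 else 0)
      = F (a+1) zeta - 2 * F a zeta + 2.
    by rewrite /Dd /ed h1u h2u eqxx !NE euz /= d1u d1o // ?Ea ?Ez; clia.
  have := @sum_ge3 _ (fun y => Dd h1 e u y + Dd h2 e u y + 2 * (if e u y then 1 else 0)) v w z vw vz wz.
  rewrite SG Gv Gw Gz => H.
  suff : F (a + 1) (b - 1) - F a b + (F (a - 1) (b + 1) - F a b) + 2 + F (a + 1) c +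
     (F (a + 1) zeta - 2 * F a zeta + 2) <= \sum_y Dd h1 e u y + \sum_y Dd h2 e u y + 2 * a by clia.
  apply: H => y yv yw yz.
  rewrite /Dd /ed h1u h2u (negbTE yw) yz /=.
  case euy: (e u y) => //=.
  have yu : y != u by apply: contraTneq euy => ->; rewrite ir.
  rewrite d1u d2u d1o // d2o // Ea.
  have := @sd_ge a (Dg e y) a0 (Dg_ge0 _ _). clia.
have rowV : (F (b-1) (a+1) - F b a + (F (b+1) (a-1) - F b a) + 2)
    + ((0 - F b c) + (F (b+1) c - F b c) + 2) + F (b+1) zeta - 2 * b
    <= \sum_y Dd h1 e v y + \sum_y Dd h2 e v y.
  have SG : \sum_y (Dd h1 e v y + Dd h2 e v y + 2 * (if e v y then 1 else 0))
      = \sum_y Dd h1 e v y + \sum_y Dd h2 e v y + 2 * b by rewrite !big_split /= -mulr_sumr sum_ind Eb.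
  have Gu : Dd h1 e v u + Dd h2 e v u + 2 * (if e v u then 1 else 0)
      = F (b-1) (a+1) - F b a + (F (b+1) (a-1) - F b a) + 2.
    by rewrite /Dd /ed h1v h2v !NE (sy v u) euv /= d1u d1v d2u d2v ?Ea ?Eb; clia.
  have Gw : Dd h1 e v w + Dd h2 e v w + 2 * (if e v w then 1 else 0)
      = (0 - F b c) + (F (b+1) c - F b c) + 2.
    by rewrite /Dd /ed h1v h2v eqxx !NE evw /= d2v d2o // ?Eb ?Ec; clia.
  have Gz : Dd h1 e v z + Dd h2 e v z + 2 * (if e v z then 1 else 0) = F (b+1) zeta.
    by rewrite /Dd /ed h1v h2v eqxx !NE (negbTE evz) /= d2v d2z; clia.
  have := @sum_ge3 _ (fun y => Dd h1 e v y + Dd h2 e v y + 2 * (if e v y then 1 else 0)) u w z uw uz wz.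
  rewrite SG Gu Gw Gz => H.
  suff : F (b-1) (a+1) - F b a + (F (b+1) (a-1) - F b a) + 2
    + ((0 - F b c) + (F (b+1) c - F b c) + 2) + F (b+1) zeta
     <= \sum_y Dd h1 e v y + \sum_y Dd h2 e v y + 2 * b by clia.
  apply: H => y yu yw yz.
  rewrite /Dd /ed h1v h2v yw (negbTE yz) /=.
  case evy: (e v y) => //=.
  have yv : y != v by apply: contraTneq evy => ->; rewrite ir.
  rewrite d1v d2v d1o // d2o // Eb.
  have := @sd_ge b (Dg e y) b0 (Dg_ge0 _ _). clia.
have D1uv : Dd h1 e u v = F (a+1) (b-1) - F a b.
  by rewrite /Dd /ed h1u !NE euv /= d1u d1v Ea Eb.
have D2uv : Dd h2 e u v = F (a-1) (b+1) - F a b.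
  by rewrite /Dd /ed h2u !NE euv /= d2u d2v Ea Eb.
have H1a : forall x y, x != u -> x != v -> y != u -> y != v -> h1 x y = e x y.
  move=> x y xu xv yu yv; rewrite /h1 flip_same; last by rewrite (negbTE xu) (negbTE yu) /= andbF.
  by rewrite /e1 flip_same // (negbTE xv) (negbTE yv) /= andbF.
have H2a : forall x y, x != u -> x != v -> y != u -> y != v -> h2 x y = e x y.
  move=> x y xu xv yu yv; rewrite /h2 flip_same; last by rewrite (negbTE xv) (negbTE yv) /= andbF.
  by rewrite /e2 flip_same // (negbTE xu) (negbTE yu) /= andbF.
have H1b : forall x, x != u -> x != v -> deg h1 x = deg e x.
  move=> x xu xv; case: (eqVneq x w) => [->|xw].
    by have := d1w; rewrite -Ec /Dg => -[].
  by have := @d1o x xu xv xw; rewrite /Dg => -[].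
have H2b : forall x, x != u -> x != v -> deg h2 x = deg e x.
  move=> x xu xv; case: (eqVneq x z) => [->|xz].
    by have := d2z; rewrite -Ez /Dg => -[].
  by have := @d2o x xu xv xz; rewrite /Dg => -[].
have Del1 := delta se sh1 uv H1a H1b.
have Del2 := delta se sh2 uv H2a H2b.
have hcb : c < b by rewrite -Ec -Eb /Dg ltz_nat.
have hba : b <= a by rewrite -Ea -Eb /Dg lez_nat.
have M := mainnum c0 hcb hba z0.
rewrite !(FC (b-1) (a+1)) !(FC (b+1) (a-1)) !(FC b a) in rowV.
rewrite D1uv in Del1. rewrite D2uv in Del2.
clia.
Qed.
Lemma sum_indP n (P : pred 'I_n) : \sum_y (if P y then 1 else 0 : int) = Posz #|[set y | P y]|.
Proof.
rewrite -sum1dep_card PoszS [RHS]big_mkcond /=; apply: eq_bigr => y _; by case: (P y).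
Qed.

Lemma sum_if1 n (u : 'I_n) (X : int) : \sum_y (if y == u then X else 0) = X.
Proof. by rewrite -big_mkcond big_pred1_eq. Qed.

Lemma rowb n (e h : rel 'I_n) u v : simple_graph e -> u != v -> ~~ e u v ->
 (forall y, h u y = (y == v) || e u y) -> Dg h u = Dg e u + 1 ->
 (forall y, y != u -> y != v -> Dg h y = Dg e y) ->
 (indegF e u <= outdegF e u)%N -> 0 <= \sum_y Dd h e u y - Dd h e u v.
Proof.
move=> [sy ir] uv euv hu du dy io.
move Ea: (Dg e u) => a. have a0 : 0 <= a by rewrite -Ea Dg_ge0.
have T : forall y, (2*a+1) * ((if arcF e u y then 1 else 0) - (if arcF e y u then 1 else 0))
    <= Dd h e u y - (if y == v then Dd h e u v else 0).
  move=> y; case: (eqVneq y v) => [->|yv].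
    by rewrite subrr /arcF (negbTE euv) (sy v u) (negbTE euv) /= subrr mulr0.
  rewrite /Dd /ed hu (negbTE yv) /=.
  case euy: (e u y); last by rewrite /arcF euy (sy y u) euy /=; clia.
  have yu : y != u by apply: contraTneq euy => ->; rewrite ir.
  rewrite /arcF euy (sy y u) euy /= du dy // Ea.
  have := @fd_ge a (Dg e y) a0 (Dg_ge0 _ _).
  rewrite -Ea /Dg !ltz_nat.
  case: (deg e y < deg e u)%N; case: (deg e u < deg e y)%N => /=; clia.
have : \sum_y ((2*a+1) * ((if arcF e u y then 1 else 0) - (if arcF e y u then 1 else 0)))
    <= \sum_y (Dd h e u y - (if y == v then Dd h e u v else 0)) by apply: ler_sum => y _; exact: T.
rewrite -mulr_sumr !sumrB sum_if1 !sum_indP.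
move: io; rewrite /indegF /outdegF -lez_nat => io H.
have : 0 <= (2*a+1) * (Posz #|[set y | arcF e u y]| - Posz #|[set y | arcF e y u]|).
  by apply: mulr_ge0; clia.
clia.
Qed.

Lemma exists_z n (e : rel 'I_n) u v w : simple_graph e -> u != w ->
  e u v -> e v w -> ~~ e u w -> (deg e v <= deg e u)%N ->
  exists z, [/\ e u z, z != v & ~~ e v z].
Proof.
move=> [sy ir] uw euv evw euw dvu.
case/boolP: [exists z, [&& e u z, z != v & ~~ e v z]].
  by case/existsP => z /and3P[h1 h2 h3]; exists z.
move=> /negP H; exfalso.
have sub : [set y | e u y] \subset v |: (([set y | e v y] :\ u) :\ w).
  apply/subsetP => y; rewrite !inE => euy.
  case: (eqVneq y v) => //= yv.
  have yw : y != w by apply: contraNneq euw => <-.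
  have yu : y != u by apply: contraTneq euy => ->; rewrite ir.
  rewrite yw yu /=; apply/negPn/negP => evy; apply: H; apply/existsP; exists y.
  by rewrite euy yv evy.
have := subset_leq_card sub.
rewrite cardsU1.
move: dvu; rewrite /deg (cardsD1 u [set y | e v y]) (cardsD1 w ([set y | e v y] :\ u)) !inE.
rewrite (sy v u) euv evw eq_sym uw /=.
move=> h1 h2. have : ((v \notin ([set y | e v y] :\ u) :\ w) <= 1)%N by apply: leq_b1. lia.
Qed.

Lemma adj_contra n (e : rel 'I_n) u v w : simple_graph e ->
  (forall h : rel 'I_n, simple_graph h -> (cM2 h <= cM2 e)%N) ->
  u != v -> u != w -> v != w ->
  e u v -> e v w -> ~~ e u w -> (deg e v <= deg e u)%N -> (deg e w < deg e v)%N -> False.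
Proof.
move=> se max uv uw vw euv evw euw dvu dwv.
have [z [euz zv evz]] := exists_z se uw euv evw euw dvu.
have [sy ir] := se.
have uz : u != z by apply: contraTneq euz => <-; rewrite ir.
have wz : w != z by apply: contraNneq euw => ->.
have vz : v != z by rewrite eq_sym.
have := core se uv uw uz vw vz wz euv evw euz euw evz dvu dwv.
have s1 : simple_graph (flip (flip e v w) u w) by do 2 apply: flip_simple => //.
have s2 : simple_graph (flip (flip e u z) v z) by do 2 apply: flip_simple => //.
have m1 := max _ s1. have m2 := max _ s2.
move: m1 m2; rewrite -!lez_nat => m1 m2. lia.
Qed.

Local Close Scope ring_scope.

Theorem claim5 (n : nat) (e : rel 'I_n) :
  simple_graph e ->
  (forall h : rel 'I_n, simple_graph h -> cM2 h <= cM2 e) ->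
  forall u v : 'I_n, u \in Xset e -> v \in Xset e -> deg e v <= deg e u ->
  Nplus e v :&: Yset e \subset Nplus e u :&: Yset e.
Proof.
Local Open Scope ring_scope.
move=> se max u v Xu Xv dvu.
have [sy ir] := se.
apply/subsetP => w; rewrite /Nplus !inE /arcF => /andP[/andP[evw dwv] Yw].
have dwu : (deg e w < deg e u)%N by apply: leq_trans dvu.
rewrite Yw dwu !andbT.
apply/negPn/negP => euw.
have uw : u != w by apply: contraTneq dwu => ->; rewrite ltnn.
have vw : v != w by apply: contraTneq evw => ->; rewrite ir.
have uv : u != v by apply: contraNneq euw => ->.
case/boolP: (e u v) => euv.
  exact: (adj_contra se max uv uw vw euv evw euw dvu dwv).
set e' := flip e u v.
have se' : simple_graph e' by apply: flip_simple.
have vu : v != u by rewrite eq_sym.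
have evu : ~~ e v u by rewrite sy.
have du : Dg e' u = Dg e u + 1 by rewrite /e' Dg_flip_a // (negbTE euv).
have dv : Dg e' v = Dg e v + 1 by rewrite /e' Dg_flip_b // (negbTE euv).
have dy : forall y, y != u -> y != v -> Dg e' y = Dg e y.
  by move=> y yu yv; rewrite /e' /Dg deg_flip_other.
have e'u : forall y, e' u y = (y == v) || e u y.
  move=> y; rewrite /e' /flip eqxx (negbTE uv) /= ?andbF ?orbF.
  by case: (eqVneq y v) => [->|] //=; rewrite (negbTE euv).
have e'v : forall y, e' v y = (y == u) || e v y.
  move=> y; rewrite /e' /flip eqxx (negbTE vu) /= ?andbF ?orbF.
  by case: (eqVneq y u) => [->|] //=; rewrite (negbTE evu).
have R1 := rowb se uv euv e'u du dy.
have R2 := rowb se vu evu e'v dv (fun y h1 h2 => dy y h2 h1).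
move: Xu Xv; rewrite !inE => Xu Xv.
have := R1 Xu. have := R2 Xv. move=> {R1 R2} R2 R1.
have Ha : forall x y, x != u -> x != v -> y != u -> y != v -> e' x y = e x y.
  move=> x y xu xv yu yv; rewrite /e' flip_same // (negbTE xu) (negbTE yu) /= ?andbF //.
have Hb : forall x, x != u -> x != v -> deg e' x = deg e x.
  by move=> x xu xv; rewrite /e' deg_flip_other.
have Del := delta se se' uv Ha Hb.
have Dvu0 : 0 <= Dd e' e v u by rewrite /Dd /ed e'v eqxx (negbTE evu) /= subr0 /F normr_ge0.
have DC : Dd e' e v u = Dd e' e u v by rewrite /Dd (edC se) (edC se').
have ge : (cM2 e <= cM2 e')%N.
  rewrite -lez_nat. rewrite DC in Dvu0 R2. clia.
have max' : forall h : rel 'I_n, simple_graph h -> (cM2 h <= cM2 e')%N.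
  by move=> h sh; apply: leq_trans (max _ sh) ge.
have e'uv : e' u v by rewrite e'u eqxx.
have e'vw : e' v w by rewrite e'v evw orbT.
have e'uw : ~~ e' u w by rewrite e'u eq_sym (negbTE vw).
have wu : w != u by rewrite eq_sym.
have wv : w != v by rewrite eq_sym.
have dw : deg e' w = deg e w by apply: Hb.
have dvu' : (deg e' v <= deg e' u)%N.
  move: du dv; rewrite /Dg -lez_nat => du dv. move: dvu; rewrite -lez_nat => dvu'. clia.
have dwv' : (deg e' w < deg e' v)%N.
  move: dv; rewrite /Dg dw -ltz_nat => dv. move: dwv; rewrite -ltz_nat => dwv'. clia.
exact: (adj_contra se' max' uv uw vw e'uv e'vw e'uw dvu' dwv').
Qed.
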